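(* Let $0<\epsilon<1$ and let $(G,\lambda^\mu),(G,\lambda^\nu)$ be two hardcore models on $G=(V,E)$, $n=|V|$, with Gibbs distributions $\mu,\nu$, both satisfying the uniqueness condition with constant gap $\eta$, and with $D:=d_{\mathrm{par}}(\mu,\nu)<\theta:=10^{-10}\frac{\epsilon^{1/4}}{n^{5/2}}$. Let $d=d_{TV}(\mu,\nu)$, $\kappa=10^{-9}\frac{\epsilon^{1/4}}{n^{3/2}}$, $B=\{v\in V:\min\{\lambda^\mu_v,\lambda^\nu_v\}\ge\kappa\}$, $S=V\setminus B$, and let $\Omega_B\subseteq\{\pm1\}^B$ be the support of both $\mu_B$ and $\nu_B$. Define $f:\Omega_B\to\mathbb{R}$ by $$f(x)=\frac12\sum_{y\in\{\pm1\}^S}\left|\frac{\nu_B(x)}{\mu_B(x)}\nu^x_S(y)-\mu^x_S(y)\right|.$$ Then $\mathrm{Var}_{x\sim\mu_B}[f(x)]=O_\eta(d^2)\cdot(n^3+n/\kappa)$, where $O_\eta$ hides a constant depending only on $\eta$.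
   Context: Hardcore model $(G,\lambda)$: weight on $\sigma\in\{-1,+1\}^V$ is $\prod_{v:\sigma_v=+1}\lambda_v$ if $\{v:\sigma_v=+1\}$ is independent, else $0$; Gibbs distribution is the normalized weight. Uniqueness condition with gap $\eta\in(0,1)$: $\lambda_v\le(1-\eta)\frac{(\Delta-1)^{\Delta-1}}{(\Delta-2)^\Delta}$ for all $v$, with $\Delta\ge3$ the maximum degree. $d_{\mathrm{par}}(\mu,\nu)=\max_v|\lambda^\mu_v-\lambda^\nu_v|$. $\mu_B$ is the marginal of $\mu$ on $B$, and $\mu^x_S$ is the distribution on $\{\pm1\}^S$ of $\mu$ conditioned on the configuration $x$ on $B$ (similarly for $\nu$). *)

(* Defs.v *)
From mathcomp Require Import all_boot all_order all_algebra.
From mathcomp Require Import reals.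
Set Implicit Arguments. Unset Strict Implicit. Unset Printing Implicit Defensive.
Import Order.TTheory GRing.Theory Num.Theory.
Local Open Scope ring_scope.

(* A graph G = (V,E) is a symmetric irreflexive relation e on a finType V.
   A spin configuration sigma in {-1,+1}^V is encoded by its set of
   +1 vertices (a {set V}); a configuration on B subset V is encoded by a
   subset of B. *)

Section Hardcore.
Variables (R : realType) (V : finType) (e : rel V).

Definition deg (v : V) : nat := #|[set u | e v u]|.
Definition maxdeg : nat := (\max_(v : V) deg v)%N.

Definition independent (A : {set V}) : bool :=
  [forall u in A, forall v in A, ~~ e u v].

Definition hc_weight (lam : V -> R) (s : {set V}) : R :=
  if independent s then \prod_(v in s) lam v else 0.

Definition hc_Z (lam : V -> R) : R := \sum_(s : {set V}) hc_weight lam s.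

Definition gibbs (lam : V -> R) (s : {set V}) : R := hc_weight lam s / hc_Z lam.

Definition uniqueness (eta : R) (lam : V -> R) : Prop :=
  forall v, lam v <= (1 - eta) *
     (((maxdeg - 1)%:R ^+ (maxdeg - 1)) / ((maxdeg - 2)%:R ^+ maxdeg)).

Definition dpar (lmu lnu : V -> R) : R := \big[Num.max/0]_(v : V) `|lmu v - lnu v|.

Definition dTV (mu nu : {set V} -> R) : R :=
  2^-1 * \sum_(s : {set V}) `|mu s - nu s|.

Definition marg (mu : {set V} -> R) (B x : {set V}) : R :=
  \sum_(s : {set V} | s :&: B == x) mu s.

Definition cond (mu : {set V} -> R) (B x y : {set V}) : R :=
  mu (x :|: y) / marg mu B x.

Definition ffun_f (mu nu : {set V} -> R) (B x : {set V}) : R :=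
  2^-1 * \sum_(y : {set V} | y \subset ~: B)
     `| marg nu B x / marg mu B x * cond nu B x y - cond mu B x y |.

Definition var_margB (mu : {set V} -> R) (B : {set V}) (g : {set V} -> R) : R :=
  let Om := [pred x : {set V} | (x \subset B) && (0 < marg mu B x)] in
  \sum_(x in Om) marg mu B x * g x ^+ 2
  - (\sum_(x in Om) marg mu B x * g x) ^+ 2.

End Hardcore.

(* Main.v *)
Require Import Defs.
From mathcomp Require Import all_boot all_order all_algebra.
From mathcomp Require Import reals sequences exp.
From mathcomp Require Import ring lra zify.
Set Implicit Arguments. Unset Strict Implicit. Unset Printing Implicit Defensive.
Import Order.TTheory GRing.Theory Num.Theory.
Local Open Scope ring_scope.
Section Aux.
Variables (R : realType) (V : finType).

Lemma sum_split (Q : {set V}) p (F : {set V} -> R) : p \in Q ->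
  \sum_(y : {set V} | y \subset Q) F y =
  \sum_(y : {set V} | y \subset Q :\ p) F y + \sum_(y : {set V} | y \subset Q :\ p) F (p |: y).
Proof.
move=> pQ; rewrite (bigID (fun y : {set V} => p \notin y)) /=; congr (_ + _).
  by apply: eq_bigl => y; rewrite subsetD1.
rewrite (reindex_onto (fun z => p |: z) (fun y => y :\ p)) /=.
  apply: eq_bigl => z; rewrite setU11 andbT subUset sub1set pQ /= subsetD1.
  case pz: (p \in z).
    rewrite andbF; apply/negbTE; apply/negP => /andP[_ /eqP E].
    by move: pz; rewrite -E setD11.
  by rewrite setU1K ?pz // eqxx andbT.
by move=> y /andP[_]; rewrite negbK => py; rewrite setD1K.
Qed.

Lemma sum_sub0 (F : {set V} -> R) :
  \sum_(y : {set V} | y \subset set0) F y = F set0.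
Proof. by apply: big_pred1 => y; rewrite /= subset0. Qed.

Lemma lemA (a b : V -> R) : (forall v, 0 <= a v) -> (forall v, 0 <= b v) ->
  forall (Q : {set V}) (g : {set V} -> R),
  (forall y, 0 <= g y) -> (forall y z : {set V}, z \subset y -> g y <= g z) ->
  \sum_(y : {set V} | y \subset Q) g y * \prod_(v in y) (a v + b v) <=
  (\prod_(v in Q) (1 + b v)) * \sum_(y : {set V} | y \subset Q) g y * \prod_(v in y) a v.
Proof.
move=> a0 b0 Q; move: {2}#|Q| (erefl #|Q|) => n; elim: n Q => [|n IH] Q cQ g g0 gm.
  move/eqP: cQ; rewrite cards_eq0 => /eqP ->; rewrite !sum_sub0 !big_set0 mul1r.
  by [].
have [p pQ]: exists p, p \in Q.
  by apply/set0Pn; rewrite -card_gt0 cQ.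
have cQ' : #|Q :\ p| = n by move: cQ; rewrite (cardsD1 p) pQ add1n => -[].
rewrite !(sum_split _ pQ).
set Q' := Q :\ p.
have pnQ : forall y : {set V}, y \subset Q' -> p \notin y.
  by move=> y; rewrite /Q' subsetD1 => /andP[].
have E1 : \sum_(y : {set V} | y \subset Q') g (p |: y) * \prod_(v in p |: y) (a v + b v)
   = (a p + b p) * \sum_(y : {set V} | y \subset Q') g (p |: y) * \prod_(v in y) (a v + b v).
  rewrite mulr_sumr; apply: eq_bigr => y /pnQ py; rewrite big_setU1 //=; ring.
have E2 : \sum_(y : {set V} | y \subset Q') g (p |: y) * \prod_(v in p |: y) a v
   = a p * \sum_(y : {set V} | y \subset Q') g (p |: y) * \prod_(v in y) a v.
  rewrite mulr_sumr; apply: eq_bigr => y /pnQ py; rewrite big_setU1 //=; ring.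
rewrite E1 E2.
have -> : \prod_(v in Q) (1 + b v) = (1 + b p) * \prod_(v in Q') (1 + b v).
  by rewrite (big_setD1 p pQ).
set P' := \prod_(v in Q') (1 + b v).
set T1 := \sum_(y : {set V} | y \subset Q') g y * \prod_(v in y) a v.
set T2 := \sum_(y : {set V} | y \subset Q') g (p |: y) * \prod_(v in y) a v.
have H1 := IH Q' cQ' g g0 gm.
have H2 := IH Q' cQ' (fun y => g (p |: y)) (fun y => g0 _)
   (fun y z zy => gm _ _ (setUS [set p] zy)).
rewrite -/T1 -/T2 -/P' in H1 H2.
have T21 : T2 <= T1.
  apply: ler_sum => y _; apply: ler_wpM2r; first by apply: prodr_ge0.
  by apply: gm; apply: subsetUr.
have T20 : 0 <= T2 by apply: sumr_ge0 => y _; apply: mulr_ge0 => //; apply: prodr_ge0.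
have P'0 : 0 <= P' by apply: prodr_ge0 => v _; have := b0 v; lra.
have ap := a0 p; have bp := b0 p.
apply: (le_trans (lerD H1 (ler_wpM2l _ H2))); first lra.
have : 0 <= P' * b p * (T1 - T2 + a p * T2).
  by apply: mulr_ge0; [apply: mulr_ge0|nra].
nra.
Qed.

Lemma prodU (x y : {set V}) (F : V -> R) : x :&: y = set0 ->
  \prod_(v in x :|: y) F v = \prod_(v in x) F v * \prod_(v in y) F v.
Proof.
move=> xy; rewrite -bigU; last by rewrite -setI_eq0 xy.
by apply: eq_bigl => v; rewrite !inE.
Qed.

Lemma pow_mono (al : R) m : 1 <= al -> (m <= #|V|)%N -> al ^+ m <= al ^+ #|V|.
Proof. by move=> al1 mn; apply: ler_weXn2l. Qed.

Variable (e : rel V).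

Lemma indep_sub (y z : {set V}) : z \subset y -> independent e y -> independent e z.
Proof.
move=> zy /forall_inP H; apply/forall_inP => u uz; apply/forall_inP => v vz.
by have /forall_inP := H u (subsetP zy u uz); apply; apply: (subsetP zy).
Qed.

Lemma hc_ge0 (lam : V -> R) s : (forall v, 0 <= lam v) -> 0 <= hc_weight e lam s.
Proof. by move=> l0; rewrite /hc_weight; case: ifP => // _; apply: prodr_ge0. Qed.

Lemma hc_mono (a c : V -> R) s : (forall v, 0 <= a v) -> (forall v, a v <= c v) ->
  hc_weight e a s <= hc_weight e c s.
Proof.
move=> a0 ac; rewrite /hc_weight; case: ifP => // _; apply: ler_prod => v _.
by rewrite a0 ac.
Qed.

Lemma cmp (a c : V -> R) (al be : R) (x P : {set V}) :
 (forall v, 0 <= a v) -> (forall v, a v <= c v) ->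
 (forall v, c v <= al * a v + be) -> (forall v, v \in x -> c v <= al * a v) ->
 1 <= al -> 0 <= be -> x :&: P = set0 ->
 \sum_(y : {set V} | y \subset P) hc_weight e c (x :|: y) <=
   al ^+ #|V| * al ^+ #|V| * (1 + be) ^+ #|V| *
   \sum_(y : {set V} | y \subset P) hc_weight e a (x :|: y).
Proof.
move=> a0 ac cab cax al1 be0 xP.
have c0 v : 0 <= c v by apply: le_trans (ac v).
set g := fun y : {set V} => if independent e (x :|: y) then (1 : R) else 0.
have g0 y : 0 <= g y by rewrite /g; case: ifP.
have gm (y z : {set V}) : z \subset y -> g y <= g z.
  move=> zy; rewrite /g; case: ifP; last by case: ifP.
  by move/(indep_sub (setUS x zy)) => ->.
have hcE (lam : V -> R) (y : {set V}) : y \subset P ->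
    hc_weight e lam (x :|: y) = \prod_(v in x) lam v * (g y * \prod_(v in y) lam v).
  move=> yP; rewrite /hc_weight /g prodU; last first.
    by apply/eqP; rewrite -subset0 -xP setIS.
  by case: ifP => _; rewrite ?mul0r ?mulr0 // mul1r.
rewrite (eq_bigr _ (fun y yP => hcE c y yP)) (eq_bigr _ (fun y yP => hcE a y yP)).
rewrite -!mulr_sumr.
have al0 : 0 <= al by apply: le_trans al1.
have S1 : \sum_(y : {set V} | y \subset P) g y * \prod_(v in y) c v <=
          \sum_(y : {set V} | y \subset P) g y * \prod_(v in y) (al * a v + be).
  apply: ler_sum => y _; apply: ler_wpM2l => //; apply: ler_prod => v _.
  by rewrite c0 cab.
have S2 := lemA (a := fun v => al * a v) (b := fun _ => be)
   (fun v => mulr_ge0 al0 (a0 v)) (fun _ => be0) P g0 gm.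
have S3 : \sum_(y : {set V} | y \subset P) g y * \prod_(v in y) (al * a v) <=
          al ^+ #|V| * \sum_(y : {set V} | y \subset P) g y * \prod_(v in y) a v.
  rewrite mulr_sumr; apply: ler_sum => y _; rewrite prodrMl.
  have := pow_mono al1 (max_card (mem y)).
  have : 0 <= g y * \prod_(v in y) a v by apply: mulr_ge0 => //; apply: prodr_ge0.
  have : 0 <= \prod_(v in y) a v by apply: prodr_ge0.
  move: (g y) (g0 y) => gy gy0; nra.
have S4 : \prod_(v in P) (1 + be) <= (1 + be) ^+ #|V|.
  by rewrite prodr_const; apply: pow_mono; [lra|apply: max_card].
have S5 : \prod_(v in x) c v <= al ^+ #|V| * \prod_(v in x) a v.
  apply: le_trans (_ : \prod_(v in x) (al * a v) <= _).
    by apply: ler_prod => v vx; rewrite c0 cax.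
  rewrite prodrMl; apply: ler_wpM2r; first by apply: prodr_ge0.
  by apply: pow_mono => //; apply: max_card.
set A := \sum_(y : {set V} | y \subset P) g y * \prod_(v in y) a v.
set Cs := \sum_(y : {set V} | y \subset P) g y * \prod_(v in y) c v.
set B1 := \sum_(y : {set V} | y \subset P) g y * \prod_(v in y) (al * a v + be).
set B2 := \sum_(y : {set V} | y \subset P) g y * \prod_(v in y) (al * a v).
rewrite -/B1 -/B2 in S2.
have A0 : 0 <= A by apply: sumr_ge0 => y _; apply: mulr_ge0 => //; apply: prodr_ge0.
have B20 : 0 <= B2.
  by apply: sumr_ge0 => y _; apply: mulr_ge0 => //; apply: prodr_ge0 => v _; apply: mulr_ge0.
have Cs0 : 0 <= Cs.
  by apply: sumr_ge0 => y _; apply: mulr_ge0 => //; apply: prodr_ge0.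
have Px0 : 0 <= \prod_(v in x) c v by apply: prodr_ge0.
have Pxa0 : 0 <= \prod_(v in x) a v by apply: prodr_ge0.
have P10 : 0 <= \prod_(v in P) (1 + be) by apply: prodr_ge0 => _ _; lra.
have an0 : 0 <= al ^+ #|V| by apply: exprn_ge0.
have bn0 : 0 <= (1 + be) ^+ #|V| by apply: exprn_ge0; lra.
have T1 : Cs <= (1 + be) ^+ #|V| * (al ^+ #|V| * A).
  apply: le_trans S1 _; apply: le_trans S2 _.
  apply: le_trans (ler_wpM2l P10 S3) _.
  by apply: ler_wpM2r => //; apply: mulr_ge0.
apply: le_trans (ler_wpM2r Cs0 S5) _.
apply: le_trans (ler_wpM2l (mulr_ge0 an0 Pxa0) T1) _.
by rewrite le_eqVlt; apply/orP; left; apply/eqP; ring.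
Qed.

Lemma minmax (a b : R) : Num.max a b = Num.min a b + `|a - b|.
Proof.
case: (leP a b) => h.
  rewrite (ler0_norm (_ : a - b <= 0)); lra.
rewrite (ger0_norm (_ : 0 <= a - b)); lra.
Qed.
Lemma minle (a b : R) : Num.min a b <= a /\ Num.min a b <= b /\ a <= Num.max a b /\ b <= Num.max a b.
Proof. case: (leP a b) => h; lra. Qed.

Lemma reidx (B x : {set V}) (F : {set V} -> R) : x \subset B ->
  \sum_(s : {set V} | s :&: B == x) F s = \sum_(y : {set V} | y \subset ~: B) F (x :|: y).
Proof.
move=> xB.
rewrite (reindex_onto (fun y => x :|: y) (fun s => s :&: ~: B)) /=; last first.
  move=> s /eqP <-; by rewrite -setIUr setUCr setIT.
apply: eq_bigl => y.
case yB: (y \subset ~: B).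
  apply/andP; split; apply/eqP/setP => v; rewrite !inE;
  have := subsetP xB v; have := subsetP yB v; rewrite !inE;
  case: (v \in x); case: (v \in y); case: (v \in B) => //= H1 H2; first [by have := H1 isT|by have := H2 isT].
apply/negbTE/negP => /andP[_ /eqP E].
by move: yB; rewrite -E subsetIr.
Qed.

Lemma sum_all (F : {set V} -> R) :
  \sum_(s : {set V}) F s = \sum_(y : {set V} | y \subset setT) F (set0 :|: y).
Proof. by apply: eq_big => [y|y _]; rewrite ?subsetT ?set0U. Qed.

Lemma term_le (F : {set V} -> R) (P : pred {set V}) i : (forall j, 0 <= F j) -> P i ->
  F i <= \sum_(j | P j) F j.
Proof.
move=> F0 Pi; rewrite (bigD1 i) //= -[leLHS]addr0 lerD2l.
by apply: sumr_ge0.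
Qed.

Lemma f_bound (lmu lnu : V -> R) (B x : {set V}) (al be : R) :
  (forall v, 0 < lmu v) -> (forall v, 0 < lnu v) ->
  (forall v, `|lmu v - lnu v| <= be) ->
  (forall v, v \in B -> `|lmu v - lnu v| <= (al - 1) * Num.min (lmu v) (lnu v)) ->
  1 <= al -> 0 <= be -> x \subset B -> 0 < marg (gibbs e lmu) B x ->
  ffun_f (gibbs e lmu) (gibbs e lnu) B x <=
    ((al ^+ #|V| * al ^+ #|V| * (1 + be) ^+ #|V|) ^+ 2 - 1) / 2.
Proof.
move=> mu0 nu0 Dbe DB al1 be0 xB mB0.
set RR := al ^+ #|V| * al ^+ #|V| * (1 + be) ^+ #|V|.
have RR1 : 1 <= RR.
  rewrite /RR -!mulrA; apply: mulr_ege1; first by apply: exprn_ege1.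
  apply: mulr_ege1; first by apply: exprn_ege1.
  apply: exprn_ege1; lra.
set lm := fun v => Num.min (lmu v) (lnu v).
set lM := fun v => Num.max (lmu v) (lnu v).
have lm0 v : 0 <= lm v.
  by rewrite /lm; have := mu0 v; have := nu0 v; case: (leP (lmu v) (lnu v)); lra.
have Hc (c : V -> R) : (forall v, lm v <= c v) -> (forall v, c v <= lM v) ->
    forall (x0 P : {set V}), x0 \subset B -> x0 :&: P = set0 ->
    \sum_(y : {set V} | y \subset P) hc_weight e c (x0 :|: y) <=
      RR * \sum_(y : {set V} | y \subset P) hc_weight e lm (x0 :|: y).
  move=> c1 c2 x0 P x0B x0P; apply: cmp => //.
  - move=> v; apply: le_trans (c2 v) _; rewrite /lM minmax -/(lm v).
    have := Dbe v; have := lm0 v; nra.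
  - move=> v vx; apply: le_trans (c2 v) _; rewrite /lM minmax -/(lm v).
    have := DB v (subsetP x0B v vx); rewrite -/(lm v); lra.
have lmmu v : lm v <= lmu v by rewrite /lm /=; case: (minle (lmu v) (lnu v)) => [? [? [? ?]]].
have lmnu v : lm v <= lnu v by rewrite /lm /=; case: (minle (lmu v) (lnu v)) => [? [? [? ?]]].
have lMmu v : lmu v <= lM v by rewrite /lM /=; case: (minle (lmu v) (lnu v)) => [? [? [? ?]]].
have lMnu v : lnu v <= lM v by rewrite /lM /=; case: (minle (lmu v) (lnu v)) => [? [? [? ?]]].
have lMlm v : lm v <= lM v by apply: le_trans (lmmu v) (lMmu v).
have mu0' v : 0 <= lmu v by apply: ltW.
have nu0' v : 0 <= lnu v by apply: ltW.
have lM0 v : 0 <= lM v by apply: le_trans (lMmu v).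
set Zm := hc_Z e lmu. set Zn := hc_Z e lnu.
set Zl := hc_Z e lm. set ZM := hc_Z e lM.
have ZE (c : V -> R) : hc_Z e c = \sum_(y : {set V} | y \subset setT) hc_weight e c (set0 :|: y).
  by rewrite /hc_Z sum_all.
have x00 : (set0 : {set V}) \subset B by apply: sub0set.
have x0P : (set0 : {set V}) :&: setT = set0 by rewrite set0I.
have ZMl : ZM <= RR * Zl by rewrite /ZM /Zl !ZE; apply: Hc.
have Zl1 : 1 <= Zl.
  rewrite /Zl /hc_Z (bigD1 set0) //= -[leLHS]addr0 lerD //.
    rewrite /hc_weight; case: ifP => [_|]; first by rewrite big_set0.
    by move/negP; case; apply/forall_inP => u; rewrite inE.
  by apply: sumr_ge0 => s _; apply: hc_ge0.
have ZmI : Zl <= Zm /\ Zm <= ZM.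
  by split; apply: ler_sum => s _; apply: hc_mono.
have ZnI : Zl <= Zn /\ Zn <= ZM.
  by split; apply: ler_sum => s _; apply: hc_mono.
set W := fun c : V -> R => \sum_(y : {set V} | y \subset ~: B) hc_weight e c (x :|: y).
have xnB : x :&: ~: B = set0.
  apply/setP => v; rewrite !inE; have := subsetP xB v.
  by case: (v \in x); case: (v \in B) => //= /(_ isT).
have WI (c : V -> R) : (forall v, lm v <= c v) -> (forall v, c v <= lM v) ->
    W lm <= W c /\ W c <= W lM.
  by move=> c1 c2; split; apply: ler_sum => y _; apply: hc_mono => // v;
     apply: le_trans (lm0 v) (c1 v).
have WMl : W lM <= RR * W lm by apply: Hc.
have Wml : W lmu <= RR * W lm by apply: Hc.
have Zm0 : 0 < Zm by apply: lt_le_trans (ltr01) (le_trans Zl1 ZmI.1).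
have Zn0 : 0 < Zn by apply: lt_le_trans (ltr01) (le_trans Zl1 ZnI.1).
have margE (c : V -> R) : marg (gibbs e c) B x = W c / hc_Z e c.
  by rewrite /marg reidx // /W mulr_suml; apply: eq_bigr => y _.
have Wm0 : 0 < W lmu.
  move: mB0; rewrite margE -/Zm => H; have := mulr_gt0 H Zm0.
  by rewrite divfK // lt0r_neq0.
have RR0 : 0 < RR by apply: lt_le_trans ltr01 RR1.
have Wl0 : 0 < W lm.
  by have := lt_le_trans Wm0 Wml; rewrite pmulr_rgt0.
have [WnI1 WnI2] := WI lnu lmnu lMnu.
have [WmI1 WmI2] := WI lmu lmmu lMmu.
have Wn0 : 0 < W lnu by apply: lt_le_trans Wl0 WnI1.
rewrite /ffun_f /cond !margE -/Zm -/Zn.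
rewrite (eq_bigr (fun y => `|Zm * hc_weight e lnu (x :|: y) - Zn * hc_weight e lmu (x :|: y)| / (Zn * W lmu))); last first.
  move=> y _; rewrite /gibbs -/Zm -/Zn.
  rewrite (_ : _ - _ = (Zm * hc_weight e lnu (x :|: y) - Zn * hc_weight e lmu (x :|: y)) / (Zn * W lmu)).
    by rewrite normrM normfV (gtr0_norm (mulr_gt0 Zn0 Wm0)).
  by field; rewrite !lt0r_neq0.
rewrite -mulr_suml.
have Hterm y : `|Zm * hc_weight e lnu (x :|: y) - Zn * hc_weight e lmu (x :|: y)| <=
   `|Zm - Zn| * hc_weight e lnu (x :|: y) +
   Zn * (hc_weight e lM (x :|: y) - hc_weight e lm (x :|: y)).
  have h1 := hc_mono (x :|: y) lm0 lmnu.
  have h2 := hc_mono (x :|: y) lm0 lmmu.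
  have h3 := hc_mono (x :|: y) (fun v => ltW (nu0 v)) lMnu.
  have h4 := hc_mono (x :|: y) (fun v => ltW (mu0 v)) lMmu.
  have h5 := hc_ge0 (x :|: y) (fun v => ltW (nu0 v)).
  rewrite (_ : _ - _ = (Zm - Zn) * hc_weight e lnu (x :|: y) + Zn * (hc_weight e lnu (x :|: y) - hc_weight e lmu (x :|: y))); last by ring.
  apply: le_trans (ler_normD _ _) _; apply: lerD.
    by rewrite normrM (ger0_norm h5).
  rewrite normrM (gtr0_norm Zn0); apply: ler_wpM2l; first by apply: ltW.
  rewrite ler_norml; apply/andP; split; lra.
have Hsum : \sum_(y : {set V} | y \subset ~: B) `|Zm * hc_weight e lnu (x :|: y) - Zn * hc_weight e lmu (x :|: y)|
   <= `|Zm - Zn| * W lnu + Zn * (W lM - W lm).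
  apply: le_trans (ler_sum _ (fun y _ => Hterm y)) _.
  by rewrite big_split /= -!mulr_sumr sumrB.
have ZD : `|Zm - Zn| <= (RR - 1) * Zn.
  case: ZmI => Z1 Z2; case: ZnI => Z3 Z4.
  rewrite ler_norml; apply/andP; split; nra.
have Hsum2 : `|Zm - Zn| * W lnu + Zn * (W lM - W lm) <= (RR ^+ 2 - 1) * (Zn * W lmu).
  have Wn1 : W lnu <= RR * W lm by apply: le_trans WnI2 WMl.
  have e1 : `|Zm - Zn| * W lnu <= (RR - 1) * Zn * (RR * W lm).
    apply: le_trans (ler_wpM2r (ltW Wn0) ZD) _.
    apply: ler_wpM2l => //; apply: mulr_ge0; [lra|apply: ltW Zn0].
  have e2 : Zn * (W lM - W lm) <= Zn * ((RR - 1) * W lm).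
    apply: ler_wpM2l; [apply: ltW Zn0|lra].
  have e3 : (RR ^+ 2 - 1) * (Zn * W lm) <= (RR ^+ 2 - 1) * (Zn * W lmu).
    apply: ler_wpM2l; first by rewrite subr_ge0 exprn_ege1.
    by apply: ler_wpM2l; [apply: ltW Zn0|].
  apply: le_trans e3; apply: le_trans (lerD e1 e2) _.
  by rewrite le_eqVlt; apply/orP; left; apply/eqP; ring.
set S := \sum_(y | _) _.
have : S / (Zn * W lmu) <= RR ^+ 2 - 1.
  by rewrite ler_pdivrMr ?mulr_gt0 //; apply: le_trans Hsum Hsum2.
lra.
Qed.

Lemma gibbs_ge0 (lam : V -> R) s : (forall v, 0 <= lam v) -> 0 <= gibbs e lam s.
Proof.
move=> l0; rewrite /gibbs; apply: divr_ge0; first by apply: hc_ge0.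
by apply: sumr_ge0 => t _; apply: hc_ge0.
Qed.

Lemma mul_div_same (a b : R) : 0 <= a <= b -> b * (a / b) = a.
Proof.
case/andP=> a0; have [->|b0] := eqVneq b 0 => ab.
  rewrite mul0r; apply: le_anti; apply/andP; split => //.
by rewrite mulrC divfK.
Qed.

Lemma sum_double (B : {set V}) (F : {set V} -> R) :
  \sum_(x : {set V} | x \subset B) \sum_(y : {set V} | y \subset ~: B) F (x :|: y) =
  \sum_(s : {set V}) F s.
Proof.
symmetry; rewrite (partition_big (fun s => s :&: B) (fun x : {set V} => x \subset B)) /=;
  last by move=> s _; apply: subsetIr.
by apply: eq_bigr => x xB; rewrite -reidx.
Qed.

Lemma meanf (lmu lnu : V -> R) (B : {set V}) :
  (forall v, 0 < lmu v) -> (forall v, 0 < lnu v) ->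
  \sum_(x in [pred x : {set V} | (x \subset B) && (0 < marg (gibbs e lmu) B x)])
     marg (gibbs e lmu) B x * ffun_f (gibbs e lmu) (gibbs e lnu) B x
  <= dTV (gibbs e lmu) (gibbs e lnu).
Proof.
move=> mu0 nu0.
have mu0' v : 0 <= lmu v by apply: ltW.
have nu0' v : 0 <= lnu v by apply: ltW.
set mu := gibbs e lmu. set nu := gibbs e lnu.
set H := fun x : {set V} => 2^-1 * \sum_(y : {set V} | y \subset ~: B) `|nu (x :|: y) - mu (x :|: y)|.
have H0 x : 0 <= H x.
  by rewrite /H; apply: mulr_ge0; [rewrite invr_ge0|apply: sumr_ge0 => y _].
apply: le_trans (_ : \sum_(x : {set V} | x \subset B) H x <= _).
  rewrite big_mkcond [X in _ <= X]big_mkcond /=; apply: ler_sum => x _.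
  rewrite !inE; case xB: (x \subset B) => //=; case: ifP => // mB0.
  rewrite /ffun_f /cond mulrCA; apply: ler_wpM2l; first by rewrite invr_ge0.
  rewrite mulr_sumr; apply: ler_sum => y yB.
  rewrite -(gtr0_norm mB0) -normrM (gtr0_norm mB0).
  set mB := marg mu B x; set nB := marg nu B x.
  have -> : mB * (nB / mB * (nu (x :|: y) / nB) - mu (x :|: y) / mB)
          = nB * (nu (x :|: y) / nB) - mu (x :|: y).
    have mBn : mB != 0 by rewrite lt0r_neq0.
    rewrite mulrBr (mulrA mB (nB / mB)) [mB * (nB / mB)]mulrC divfK //.
    by rewrite [mB * (_ / mB)]mulrC divfK.
  rewrite mul_div_same //; apply/andP; split; first by apply: gibbs_ge0.
  rewrite /nB /marg reidx // (bigD1 y) //= -[leLHS]addr0 lerD2l.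
  by apply: sumr_ge0 => j _; apply: gibbs_ge0.
rewrite /H /= -mulr_sumr (sum_double B (fun s => `|nu s - mu s|)) /dTV.
apply: ler_wpM2l; first by rewrite invr_ge0.
by apply: ler_sum => s _; rewrite distrC.
Qed.

Lemma var_le (mu : {set V} -> R) (B : {set V}) (g : {set V} -> R) (U d : R) :
  0 <= U ->
  (forall x : {set V}, x \subset B -> 0 < marg mu B x -> 0 <= g x <= U) ->
  \sum_(x in [pred x : {set V} | (x \subset B) && (0 < marg mu B x)]) marg mu B x * g x <= d ->
  var_margB mu B g <= U * d.
Proof.
move=> U0 gU Hd; rewrite /var_margB /=.
set Om := [pred x : {set V} | _].
apply: le_trans (_ : \sum_(x in Om) marg mu B x * g x ^+ 2 <= _).
  by rewrite lerBlDr lerDl sqr_ge0.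
apply: le_trans (_ : \sum_(x in Om) U * (marg mu B x * g x) <= _).
  apply: ler_sum => x; rewrite inE => /andP[xB mB].
  case/andP: (gU x xB mB) => g0 gU'.
  have h := mulr_ge0 (mulr_ge0 (ltW mB) g0) (_ : 0 <= U - g x).
  have h2 : 0 <= U - g x by rewrite subr_ge0.
  have := h h2; rewrite expr2; nra.
by rewrite -mulr_sumr; apply: ler_wpM2l.
Qed.

Hypothesis (esym : symmetric e) (eirr : irreflexive e).

Lemma indepU1 v (t : {set V}) :
  independent e (v |: t) = independent e t && [forall u in t, ~~ e v u].
Proof.
apply/idP/andP.
  move=> H; split; first by apply: indep_sub H; apply: subsetUr.
  move: H => /forall_inP H; apply/forall_inP => u ut.
  by have /forall_inP := H v (setU11 v t); apply; rewrite in_setU1 ut orbT.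
case=> /forall_inP H1 /forall_inP H2; apply/forall_inP => u; rewrite in_setU1.
case/orP => [/eqP ->|ut]; apply/forall_inP => w; rewrite in_setU1.
  by case/orP => [/eqP ->|wt]; [rewrite eirr|apply: H2].
case/orP => [/eqP ->|wt]; first by rewrite esym; apply: H2.
by have /forall_inP := H1 u ut; apply.
Qed.

Definition nbr v : {set V} := v |: [set u | e v u].

Lemma capN v (t : {set V}) :
  (t :&: nbr v == set0) = (v \notin t) && [forall u in t, ~~ e v u].
Proof.
apply/eqP/andP.
  move/setP=> H; split.
    by apply/negP => vt; have := H v; rewrite !inE vt eqxx.
  apply/forall_inP => u ut; apply/negP => evu.
  by have := H u; rewrite !inE ut evu orbT.
case=> vt /forall_inP H; apply/setP => u; rewrite !inE.
case ut: (u \in t) => //=; case: eqP => [uv|_]; first by move: vt; rewrite -uv ut.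
by apply/negbTE/H.
Qed.

Lemma hcU1 (lam : V -> R) v (t : {set V}) : v \notin t ->
  hc_weight e lam (v |: t) =
  if t :&: nbr v == set0 then lam v * hc_weight e lam t else 0.
Proof.
move=> vt; rewrite capN vt /= /hc_weight indepU1 big_setU1 //=.
by case: (independent e t); case: [forall u in t, ~~ e v u]; rewrite ?mulr0.
Qed.

Lemma A1_rel (lam : V -> R) v :
  \sum_(s : {set V} | v \in s) hc_weight e lam s =
  lam v * \sum_(s : {set V} | s :&: nbr v == set0) hc_weight e lam s.
Proof.
rewrite (reindex_onto (fun t => v |: t) (fun s => s :\ v)) /=; last first.
  by move=> s vs; rewrite setD1K.
rewrite (eq_bigl (fun t : {set V} => v \notin t)); last first.
  move=> t /=; rewrite setU11 /=; case vt: (v \in t).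
    apply/negbTE/negP => /eqP E; by move: vt; rewrite -E setD11.
  by rewrite setU1K ?vt // eqxx.
rewrite (eq_bigr (fun t => if t :&: nbr v == set0 then lam v * hc_weight e lam t else 0));
  last by move=> t vt; rewrite hcU1.
rewrite mulr_sumr big_mkcond [RHS]big_mkcond /=; apply: eq_bigr => t _.
by rewrite capN; case vt: (v \in t) => //=; case: ifP.
Qed.

Lemma Zbound (lam : V -> R) v : (forall u, 0 <= lam u) ->
  hc_Z e lam <= (\prod_(u in nbr v) (1 + lam u)) *
     \sum_(s : {set V} | s :&: nbr v == set0) hc_weight e lam s.
Proof.
move=> l0.
set N := nbr v.
set a := fun u => if u \in N then 0 else lam u.
set b := fun u => if u \in N then lam u else 0.
set g := fun y : {set V} => if independent e y then (1 : R) else 0.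
have a0 u : 0 <= a u by rewrite /a; case: ifP.
have b0 u : 0 <= b u by rewrite /b; case: ifP.
have g0 y : 0 <= g y by rewrite /g; case: ifP.
have gm (y z : {set V}) : z \subset y -> g y <= g z.
  move=> zy; rewrite /g; case: ifP; last by case: ifP.
  by move/(indep_sub zy) => ->.
have := lemA a0 b0 setT g0 gm.
have -> : \sum_(y : {set V} | y \subset setT) g y * \prod_(v0 in y) (a v0 + b v0) = hc_Z e lam.
  rewrite /hc_Z; apply: eq_big => [y|y _]; first by rewrite subsetT.
  rewrite /g /hc_weight; case: ifP => _; rewrite ?mul0r // mul1r.
  by apply: eq_bigr => u _; rewrite /a /b; case: ifP; rewrite ?addr0 ?add0r.
have -> : \prod_(v0 in setT) (1 + b v0) = \prod_(u in N) (1 + lam u).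
  rewrite [RHS]big_mkcond /=; rewrite (eq_bigl (fun _ => true)); last by move=> u; rewrite inE.
  by apply: eq_bigr => u _; rewrite /b; case: ifP; rewrite ?addr0.
have -> : \sum_(y : {set V} | y \subset setT) g y * \prod_(v0 in y) a v0 =
          \sum_(s : {set V} | s :&: N == set0) hc_weight e lam s.
  rewrite [RHS]big_mkcond /=; apply: eq_big => [y|y _]; first by rewrite subsetT.
  case: ifP => yN.
    rewrite /g /hc_weight; case: ifP => _; rewrite ?mul0r // mul1r.
    apply: eq_bigr => u uy; rewrite /a; case: ifP => // uN.
    by move/eqP/setP: yN => /(_ u); rewrite in_setI in_set0 uy uN.
  have [u]: exists u, u \in y :&: N by apply/set0Pn; rewrite yN.
  rewrite inE => /andP[uy uN].
  by rewrite (bigD1 u) //= /a /= uN mul0r mulr0.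
by [].
Qed.

Lemma event_le (mu nu : {set V} -> R) (E : pred {set V}) :
  `|\sum_(s | E s) mu s - \sum_(s | E s) nu s| <= 2 * dTV mu nu.
Proof.
rewrite -sumrB; apply: le_trans (ler_norm_sum _ _ _) _.
have -> : 2 * dTV mu nu = \sum_(s : {set V}) `|mu s - nu s|.
  by rewrite /dTV mulrA mulfV ?mul1r // pnatr_eq0.
rewrite big_mkcond /=; apply: ler_sum => s _; case: ifP => // _.
Qed.

Lemma d_lower (lmu lnu : V -> R) v : (forall u, 0 < lmu u) -> (forall u, 0 < lnu u) ->
  `|lmu v - lnu v| <= 2 * dTV (gibbs e lmu) (gibbs e lnu) * (1 + lnu v) *
      \prod_(u in nbr v) (1 + lmu u).
Proof.
move=> mu0 nu0.
have mu0' u : 0 <= lmu u by apply: ltW.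
have nu0' u : 0 <= lnu u by apply: ltW.
set d := dTV _ _.
set Z := hc_Z e lmu. set Z' := hc_Z e lnu.
set Z0 := \sum_(s : {set V} | s :&: nbr v == set0) hc_weight e lmu s.
set Z0' := \sum_(s : {set V} | s :&: nbr v == set0) hc_weight e lnu s.
have Zpos (lam : V -> R) : (forall u, 0 <= lam u) -> 0 < hc_Z e lam.
  move=> l0; rewrite /hc_Z (bigD1 set0) //=; apply: lt_le_trans (_ : 0 < 1) _ => //.
  rewrite -[leLHS]addr0 lerD //.
    rewrite /hc_weight; case: ifP => [_|]; first by rewrite big_set0.
    by move/negP; case; apply/forall_inP => u; rewrite inE.
  by apply: sumr_ge0 => s _; apply: hc_ge0.
have Z0p := Zpos _ mu0'. have Z0p' := Zpos _ nu0'.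
have A1 (lam : V -> R) : \sum_(s : {set V} | v \in s) gibbs e lam s =
    lam v * ((\sum_(s : {set V} | s :&: nbr v == set0) hc_weight e lam s) / hc_Z e lam).
  by rewrite /gibbs -mulr_suml A1_rel mulrA.
have A0 (lam : V -> R) : \sum_(s : {set V} | s :&: nbr v == set0) gibbs e lam s =
    (\sum_(s : {set V} | s :&: nbr v == set0) hc_weight e lam s) / hc_Z e lam.
  by rewrite /gibbs -mulr_suml.
have E1 := event_le (gibbs e lmu) (gibbs e lnu) (fun s => v \in s).
have E0 := event_le (gibbs e lmu) (gibbs e lnu) (fun s => s :&: nbr v == set0).
rewrite !A1 -/Z -/Z' -/Z0 -/Z0' -/d in E1.
rewrite !A0 -/Z -/Z' -/Z0 -/Z0' -/d in E0.
set p := Z0 / Z in E1 E0 *. set q := Z0' / Z' in E1 E0 *.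
set P := \prod_(u in nbr v) (1 + lmu u).
have Pp : 1 <= P * p.
  have := Zbound v mu0'; rewrite -/Z -/Z0 -/P => H.
  by rewrite /p mulrA ler_pdivlMr // mul1r.
have P0 : 0 <= P by apply: prodr_ge0 => u _; have := mu0' u; lra.
have p0 : 0 <= p.
  by rewrite /p; apply: divr_ge0; [apply: sumr_ge0 => s _; apply: hc_ge0|apply: ltW].
have key : `|lmu v - lnu v| * p <= d * 2 * (1 + lnu v).
  have -> : `|lmu v - lnu v| * p = `|(lmu v * p - lnu v * q) + lnu v * (q - p)|.
    by rewrite -(ger0_norm p0) -normrM (ger0_norm p0); congr `|_|; ring.
  apply: le_trans (ler_normD _ _) _.
  rewrite normrM (ger0_norm (nu0' v)).
  have : `|q - p| <= 2 * d by rewrite distrC.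
  have := nu0' v; nra.
have D0 : 0 <= `|lmu v - lnu v| by [].
apply: le_trans (_ : `|lmu v - lnu v| * (P * p) <= _).
  by rewrite -[leLHS]mulr1 ler_wpM2l.
have := ler_wpM2l P0 key; nra.
Qed.
End Aux.

Section Num.
Variable (R : realType).

Lemma bernoulli (x : R) (k : nat) : 0 <= x -> (1 + x) ^+ k * (1 - k%:R * x) <= 1.
Proof.
move=> x0; elim: k => [|k IH]; first by rewrite expr0 mul0r subr0 mul1r.
rewrite exprS -mulrA.
have h : (1 + x) * (1 - k.+1%:R * x) <= 1 - k%:R * x.
  rewrite -natr1; have : 0 <= k%:R * x ^+ 2 + x ^+ 2.
    by apply: addr_ge0 => //; apply: mulr_ge0 => //; apply: sqr_ge0.
  rewrite expr2; nra.
have p0 : 0 <= (1 + x) ^+ k by apply: exprn_ge0; lra.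
by apply: le_trans IH; rewrite mulrCA; apply: ler_wpM2l.
Qed.

Lemma prod_exp (V : finType) (A : {set V}) (x : V -> R) : (forall u, 0 <= x u) ->
  \prod_(u in A) (1 + x u) <= expR (\sum_(u in A) x u).
Proof.
move=> x0; rewrite expR_sum; apply: ler_prod => u _.
by rewrite expR_ge1Dx andbT; have := x0 u; lra.
Qed.

Lemma Xbound (D : nat) : (3 <= D)%N ->
  (D + 2)%:R * (((D - 1)%:R ^+ (D - 1)) / ((D - 2)%:R ^+ D) : R) <= 5 * expR 2.
Proof.
case: D => [|[|m]] // Hm.
have m1 : (1 <= m)%N by [].
rewrite !subSS !subn0.
have mR : (1 : R) <= m%:R by rewrite ler1n.
have m0 : (0 : R) < m%:R by lra.
have E : (m.+1%:R ^+ m.+1 / m%:R ^+ m.+2 : R) = (1 + m%:R^-1) ^+ m.+1 / m%:R.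
  rewrite (_ : 1 + m%:R^-1 = m.+1%:R / m%:R); last by rewrite -natr1; field; lra.
  rewrite expr_div_n [m%:R ^+ m.+2]exprS.
  have b0 : (m%:R : R) ^+ m.+1 != 0 by rewrite expf_neq0 // lt0r_neq0.
  move: b0; set a := _ ^+ m.+1; set b := _ ^+ m.+1 => b0.
  by field; rewrite b0 lt0r_neq0.
rewrite E.
have B1 : (1 + m%:R^-1) ^+ m.+1 <= expR (2 : R).
  apply: (@le_trans _ _ (expR (m%:R^-1) ^+ m.+1)).
    apply: lerXn2r; rewrite ?nnegrE ?expR_ge0 ?expR_ge1Dx //.
    by apply: addr_ge0 => //; rewrite invr_ge0 ltW.
  rewrite -expRM_natl ler_expR -natr1 mulrDl mul1r mulfV ?lt0r_neq0 //.
  have : m%:R^-1 <= 1 :> R by rewrite invf_le1.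
  lra.
have B2 : ((m.+2 + 2)%:R / m%:R : R) <= 5.
  have -> : (m.+2 + 2 = m + 4)%N by lia.
  by rewrite ler_pdivrMr // natrD; lra.
have e0 : 0 <= (1 + m%:R^-1) ^+ m.+1 :> R.
  by apply: exprn_ge0; apply: addr_ge0 => //; rewrite invr_ge0 ltW.
have -> : (m.+2 + 2)%:R * ((1 + m%:R^-1) ^+ m.+1 / m%:R) =
          ((m.+2 + 2)%:R / m%:R) * (1 + m%:R^-1) ^+ m.+1 :> R.
  by rewrite mulrA mulrAC.
have := expR_ge0 (2 : R).
have : 0 <= ((m.+2 + 2)%:R / m%:R : R) by apply: divr_ge0 => //; apply: ltW.
nra.
Qed.
End Num.

Theorem lemma5p4 (R : realType) (eta : R) (Heta0 : 0 < eta) (Heta1 : eta < 1) :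
  exists C : R, 0 < C /\
  forall (V : finType) (e : rel V) (lmu lnu : V -> R) (eps : R),
    symmetric e -> irreflexive e ->
    (3 <= maxdeg e)%N ->
    0 < eps -> eps < 1 ->
    (forall v, 0 < lmu v) -> (forall v, 0 < lnu v) ->
    uniqueness e eta lmu -> uniqueness e eta lnu ->
    let n : R := #|V|%:R in
    let mu := gibbs e lmu in
    let nu := gibbs e lnu in
    let theta := 10 ^- 10 * Num.sqrt (Num.sqrt eps) / (n ^+ 2 * Num.sqrt n) in
    dpar lmu lnu < theta ->
    let d := dTV mu nu in
    let kappa := 10 ^- 9 * Num.sqrt (Num.sqrt eps) / (n * Num.sqrt n) in
    let B := [set v | kappa <= Num.min (lmu v) (lnu v)] in
    var_margB mu B (ffun_f mu nu B) <= C * d ^+ 2 * (n ^+ 3 + n / kappa).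
Proof.
set M0 := 2 * expR (5 * expR (2 : R)).
have M00 : 0 < M0 by rewrite mulr_gt0 // expR_gt0.
exists (8 * M0); split; first by rewrite mulr_gt0.
intros V e lmu lnu eps esym eirr D3 eps0 eps1 mu0 nu0 Umu Unu n mu nu theta HD.
cbv zeta.
set s := Num.sqrt (Num.sqrt eps).
set sn := Num.sqrt n.
set d := dTV mu nu.
set kappa := 10 ^- 9 * s / (n * sn).
set B := [set v | kappa <= Num.min (lmu v) (lnu v)].
have mu0' v : 0 <= lmu v by apply: ltW.
have nu0' v : 0 <= lnu v by apply: ltW.
have nV : (3 <= #|V|)%N.
  apply: leq_trans D3 _; apply/bigmax_leqP => v _; apply: max_card.
have n3 : 3 <= n by rewrite /n ler_nat.
have n0 : 0 < n by lra.
have s0 : 0 < s by rewrite /s !sqrtr_gt0.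
have s1 : s <= 1.
  have h : Num.sqrt eps <= 1 by rewrite -sqrtr1 ler_sqrt //; lra.
  by rewrite /s -sqrtr1 ler_sqrt.
have sn1 : 1 <= sn by rewrite /sn -sqrtr1 ler_sqrt //; lra.
have t0 : (0 : R) < 10 ^- 9 by rewrite invr_gt0 exprn_gt0.
have t1 : (10 : R) ^- 9 <= 1.
  by rewrite invf_le1 ?exprn_gt0 //; apply: exprn_ege1; lra.
have kappa0 : 0 < kappa.
  by rewrite /kappa; apply: divr_gt0; apply: mulr_gt0 => //; lra.
have kappa1 : kappa <= 1.
  rewrite /kappa ler_pdivrMr ?mulr_gt0 //; last by lra.
  have : 1 <= n * sn by nra.
  have : 10 ^- 9 * s <= 1 by nra.
  lra.
have thetaE : theta = kappa / (10 * n).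
  rewrite /theta /kappa -/s -/sn (_ : (10 : R) ^- 10 = 10 ^- 9 / 10); last first.
    by rewrite exprS invfM mulrC.
  field; rewrite !lt0r_neq0 //; lra.
set D := dpar lmu lnu in HD.
have D0 : 0 <= D by rewrite /D /dpar; apply: bigmax_ge_id.
have DV v : `|lmu v - lnu v| <= D.
  by rewrite /D /dpar; exact: (le_bigmax _ (fun v => `|lmu v - lnu v|)).
set u := D / kappa.
have u0 : 0 <= u by rewrite /u divr_ge0 // ltW.
have Du : D <= u by rewrite /u ler_pdivlMr // ler_piMr.
have un : 10 * n * u < 1.
  have H : D * (10 * n) < kappa.
    by move: HD; rewrite thetaE ltr_pdivlMr //; lra.
  have -> : 10 * n * u = (D * (10 * n)) / kappa by rewrite /u; field; rewrite lt0r_neq0.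
  by rewrite ltr_pdivrMr // mul1r.
set X := ((maxdeg e - 1)%:R ^+ (maxdeg e - 1)) / ((maxdeg e - 2)%:R ^+ maxdeg e) : R.
have X0 : 0 <= X by apply: divr_ge0; apply: exprn_ge0.
have lX (lam : V -> R) : uniqueness e eta lam -> forall v, lam v <= X.
  move=> U v; apply: le_trans (U v) _; rewrite ler_piMl //; lra.
have XB := Xbound R D3.
have d0 : 0 <= d.
  by rewrite /d /dTV mulr_ge0 ?invr_ge0 // sumr_ge0.
have DM : D <= M0 * d.
  rewrite /D /dpar; apply: bigmax_le; first by rewrite mulr_ge0 // ltW.
  move=> v _.
  apply: le_trans (d_lower esym eirr v mu0 nu0) _.
  have -> : dTV (gibbs e lmu) (gibbs e lnu) = d by [].
  suff Pb : (1 + lnu v) * \prod_(u0 in nbr e v) (1 + lmu u0) <= expR (5 * expR 2).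
    have h2d : 0 <= 2 * d by rewrite mulr_ge0.
    have := ler_wpM2l h2d Pb; rewrite /M0; nra.
  apply: le_trans (_ : expR (lnu v) * expR (\sum_(u0 in nbr e v) lmu u0) <= _).
    apply: ler_pM; first by have := nu0' v; lra.
    - by apply: prodr_ge0 => w _; have := mu0' w; lra.
    - by rewrite expR_ge1Dx.
    - by apply: prod_exp.
  rewrite -expRD ler_expR.
  have cN : (#|nbr e v| <= maxdeg e + 1)%N.
    rewrite /nbr cardsU1 addnC leq_add //; last by case: (_ \notin _).
    by change (deg e v <= maxdeg e)%N; rewrite /maxdeg; exact: leq_bigmax.
  have S1 : \sum_(w in nbr e v) lmu w <= #|nbr e v|%:R * X.
    rewrite mulr_natl -sumr_const; apply: ler_sum => w _; exact: lX _ Umu w.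
  apply: le_trans XB.
  have : (#|nbr e v|%:R : R) <= (maxdeg e + 1)%:R by rewrite ler_nat.
  have := lX _ Unu v.
  rewrite !natrD -/X.
  have := X0; nra.
set U := 15 / 2 * n * u.
have U0 : 0 <= U by rewrite /U; apply: mulr_ge0 => //; apply: mulr_ge0 => //; lra.
have fB (x : {set V}) : x \subset B -> 0 < marg mu B x -> 0 <= ffun_f mu nu B x <= U.
  move=> xB mB; apply/andP; split.
    by rewrite /ffun_f mulr_ge0 ?invr_ge0 // sumr_ge0.
  have := @f_bound R V e lmu lnu B x (1 + u) D mu0 nu0 DV _ _ D0 xB mB.
  rewrite -/mu -/nu => H; apply: le_trans (H _ _) _.
  - move=> v; rewrite inE => vB; apply: le_trans (DV v) _.
    rewrite addrAC subrr add0r.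
    apply: le_trans (_ : u * kappa <= _); first by rewrite /u divfK // lt0r_neq0.
    by apply: ler_wpM2l.
  - lra.
  set RR := _ * _ * _.
  have RR0 : 0 <= RR by rewrite /RR !mulr_ge0 // exprn_ge0 //; lra.
  have RRY : RR <= (1 + u) ^+ (3 * #|V|).
    have E3 : (3 * #|V| = #|V| + #|V| + #|V|)%N.
      by rewrite !mulSn mul0n addn0 addnA.
    rewrite E3 !exprD /RR; apply: ler_wpM2l.
      by apply: mulr_ge0; apply: exprn_ge0; lra.
    by apply: lerXn2r; rewrite ?nnegrE; lra.
  have Y1 : 1 <= (1 + u) ^+ (3 * #|V|) by apply: exprn_ege1; lra.
  have BY : ((1 + u) ^+ (3 * #|V|)) ^+ 2 * (1 - 6 * n * u) <= 1.
    have := bernoulli (x := u) (6 * #|V|) u0.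
    have E6 : (3 * #|V| * 2 = 6 * #|V|)%N by rewrite mulnAC.
    rewrite -exprM E6.
    by rewrite natrM /n mulrA.
  set Y := (1 + u) ^+ (3 * #|V|) in RRY Y1 BY.
  have RR2 : RR ^+ 2 <= Y ^+ 2 by apply: lerXn2r; rewrite ?nnegrE //; lra.
  have Y2 : 1 <= Y ^+ 2 by apply: exprn_ege1.
  rewrite /U ler_pdivrMr //.
  have t6 : 6 * n * u <= 6 / 10 by lra.
  have t0' : 0 <= 6 * n * u by apply: mulr_ge0 => //; apply: mulr_ge0 => //; lra.
  have -> : 15 / 2 * n * u * 2 = 5 / 2 * (6 * n * u) by ring.
  move: RR2 BY Y2 t6 t0'; move: (Y ^+ 2) (6 * n * u) => W t RR2 BY Y2 t6 t0'.
  have W0 : 0 <= W by lra.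
  have W25 : W <= 5 / 2.
    have : W * (4 / 10) <= W * (1 - t) by apply: ler_wpM2l => //; lra.
    lra.
  have h1 : W * (1 - t) = W - t * W by ring.
  have h2 : t * W <= t * (5 / 2) by apply: ler_wpM2l.
  have h3 : t * (5 / 2) = 5 / 2 * t by ring.
  lra.
have VB := var_le (U := U) (d := d) U0 fB (meanf e B mu0 nu0).
apply: le_trans VB _.
rewrite /U /u.
have nk : 0 <= n / kappa by apply: divr_ge0; lra.
have n30 : 0 <= n ^+ 3 by apply: exprn_ge0; lra.
have DM' : D / kappa <= M0 * d / kappa by rewrite ler_pM2r // invr_gt0.
have c0 : 0 <= 15 / 2 * n * d by apply: mulr_ge0; [apply: mulr_ge0|]; lra.
have h1 : 15 / 2 * n * (D / kappa) * d = (15 / 2 * n * d) * (D / kappa) by ring.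
have h2 : (15 / 2 * n * d) * (M0 * d / kappa) = 15 / 2 * (M0 * d ^+ 2) * (n / kappa).
  by rewrite expr2; field; rewrite lt0r_neq0.
have h3 := ler_wpM2l c0 DM'.
have h4 : 8 * M0 * d ^+ 2 * (n ^+ 3 + n / kappa) =
   8 * (M0 * d ^+ 2) * (n / kappa) + 8 * (M0 * d ^+ 2) * n ^+ 3 by ring.
have m0 : 0 <= M0 * d ^+ 2 by apply: mulr_ge0 => //; [lra|apply: sqr_ge0].
have h5 : 0 <= (M0 * d ^+ 2) * (n / kappa) by apply: mulr_ge0.
have h6 : 0 <= (M0 * d ^+ 2) * n ^+ 3 by apply: mulr_ge0.
rewrite h1 h4; move: h3 h5 h6; rewrite h2.
move: (M0 * d ^+ 2) (n / kappa) (n ^+ 3) (15 / 2 * n * d * (D / kappa)) => a b c x.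
move=> h3 h5 h6.
apply: le_trans h3 _; rewrite -!mulrA; lra.
Qed.
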